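(* Consider an ESP instance with integer weights and let $L^*$ be the minimum total latency of a feasible expanding search pattern. Fix $\varepsilon>0$, let $W=\sum_{v\in V}w_v$ and $\omega=\lceil \log W/\log(1+\varepsilon)\rceil$. For each $i\in\{0,\dots,\omega\}$ let $T_i$ be the tree obtained by applying a polynomial-time $5/2$-approximation algorithm for the quota version of the prize-collecting Steiner tree problem with quota $q_i=W-W(1+\varepsilon)^{-i}$, so that $T_i$ contains $r$, has total vertex weight at least $q_i$, and has length $\ell(T_i)=\sum_{e\in E(T_i)}\ell_e$ at most $5/2$ times the minimum length of such a tree; here $T_0=(\{r\},\emptyset)$. Let $H$ be the directed graph with vertex set $\{0,\dots,\omega\}$, arcs $(i,j)$ for all $i<j$, and arc costs $c_{i,j}=W(1+\varepsilon)^{-i}\ell(T_j)$. Then a shortest $(0,\omega)$-path in $H$ has cost at most $\frac52(1+\varepsilon)eL^*$.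
   Context: ESP: connected undirected graph $G=(V,E)$, root $r$, edge lengths $\ell_e\in\mathbb{Z}_{\ge0}$, vertex weights $w_v\in\mathbb{Z}_{\ge0}$, $V^*=\{v:w_v>0\}$. An expanding search pattern is a sequence $\sigma=(e_1,\dots,e_m)$ of edges with $r\in e_1$ such that $\{e_1,\dots,e_i\}$ is a tree for every $i$; it is feasible if it visits all of $V^*$. For $v\in V^*\setminus\{r\}$, $k_v=\min\{i:v\in e_i\}$, $k_r=0$, latency $L_v(\sigma)=\sum_{i\le k_v}\ell_{e_i}$, total latency $L(\sigma)=\sum_{v\in V^*}w_vL_v(\sigma)$. The cost of a path in $H$ is the sum of its arc costs. *)

(* Defs.v *)
From HB Require Import structures.
From mathcomp Require Import all_boot all_order all_algebra.
From mathcomp Require Import reals sequences exp.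
Set Implicit Arguments. Unset Strict Implicit. Unset Printing Implicit Defensive.
Import Order.TTheory GRing.Theory Num.Theory.

Section Graphs.
Variables (V E : finType) (ends : E -> V * V).

Definition incident (v : V) (e : E) : bool :=
  (v == (ends e).1) || (v == (ends e).2).

Definition adj (F : {set E}) : rel V := fun x y =>
  [exists e in F, (((ends e).1 == x) && ((ends e).2 == y))
               || (((ends e).1 == y) && ((ends e).2 == x))].

Definition graph_connected : Prop := forall x y : V, connect (adj setT) x y.

Definition vset (F : {set E}) : {set V} := [set v | [exists e in F, incident v e]].

(* (U, F) is a tree: nonempty vertex set, edges inside U, connected,
   and acyclic (every edge is a bridge, i.e. minimally connected). *)
Definition is_tree (U : {set V}) (F : {set E}) : Prop :=
  [/\ U != set0,
      (forall e, e \in F -> (ends e).1 \in U /\ (ends e).2 \in U),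
      (forall x y, x \in U -> y \in U -> connect (adj F) x y) &
      (forall e, e \in F -> ~~ connect (adj (F :\ e)) (ends e).1 (ends e).2)].

Definition edge_tree (F : {set E}) : Prop := is_tree (vset F) F.

Definition expanding_pattern (r : V) (s : seq E) : Prop :=
  (match s with [::] => True | e :: _ => incident r e end) /\
  (forall i, 0 < i <= size s -> edge_tree [set e in take i s]).

Definition feasible (w : V -> nat) (r : V) (s : seq E) : Prop :=
  forall v, 0 < w v -> (v == r) || has (incident v) s.

(* latency of v: total length of e_1..e_{k_v}, k_v the first index with
   v in e_{k_v} (1-based), and k_r = 0 *)
Definition latency (len : E -> nat) (r : V) (s : seq E) (v : V) : nat :=
  if v == r then 0 else \sum_(e <- take (find (incident v) s).+1 s) len e.

Definition total_latency (len : E -> nat) (w : V -> nat) (r : V) (s : seq E) : nat :=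
  \sum_(v | 0 < w v) w v * latency len r s v.

Definition wset (w : V -> nat) (U : {set V}) : nat := \sum_(v in U) w v.
Definition lenset (len : E -> nat) (F : {set E}) : nat := \sum_(e in F) len e.

End Graphs.

Fixpoint path_cost (R : Type) (add : R -> R -> R) (zero : R)
    (c : nat -> nat -> R) (i : nat) (p : seq nat) : R :=
  match p with
  | [::] => zero
  | j :: p' => add (c i j) (path_cost add zero c j p')
  end.

(* Main.v *)
Require Import Defs.
From HB Require Import structures.
From mathcomp Require Import all_boot all_order all_algebra.
From mathcomp Require Import reals sequences exp.
From mathcomp Require Import ring lra zify.
Import Order.TTheory GRing.Theory Num.Theory.


Lemma sum_le_sub (T : finType) (w : T -> nat) (P : pred T) (A : {set T}) :
  (forall v, P v -> 0 < w v -> v \in A) ->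
  \sum_(v | P v) w v <= \sum_(v in A) w v.
Proof.
move=> h; rewrite [X in X <= _]big_mkcond [X in _ <= X]big_mkcond /=.
apply: leq_sum => v _; case Pv: (P v) => //.
case: (posnP (w v)) => [->|wp]; first by case: ifP.
by rewrite h.
Qed.

Lemma sum_set_seq (T : finType) (f : T -> nat) (l : seq T) :
  \sum_(e in [set x in l]) f e <= \sum_(e <- l) f e.
Proof.
elim: l => [|a l IH].
  have -> : [set x in [::]] = set0 :> {set T} by apply/setP => x; rewrite !inE.
  by rewrite big_set0.
have -> : [set x in a :: l] = a |: [set x in l] by apply/setP => x; rewrite !inE.
rewrite big_cons.
case: (boolP (a \in [set x in l])) => ha.
  by rewrite (setUidPr _) ?sub1set // (leq_trans IH) // leq_addl.
by rewrite big_setU1 //= leq_add2l.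
Qed.

Lemma tree_single (V E : finType) (ends : E -> V * V) (r : V) :
  is_tree ends [set r] set0.
Proof.
rewrite /is_tree; split.
- by apply/set0Pn; exists r; rewrite inE.
- by move=> e; rewrite in_set0.
- by move=> x y; rewrite !inE => /eqP -> /eqP ->; apply: connect0.
- by move=> e; rewrite in_set0.
Qed.

Lemma prefix_tree (V E : finType) (ends : E -> V * V) (len : E -> nat)
  (w : V -> nat) (r : V) (s : seq E) (tau : nat) :
  expanding_pattern ends r s -> feasible ends w r s ->
  exists U' F', [/\ is_tree ends U' F', r \in U', lenset len F' <= tau &
    \sum_(v | latency ends len r s v <= tau) w v <= wset w U'].
Proof.
move=> [hhead htree] hfeas.
pose P k := \sum_(e <- take k s) len e.
have ex : exists k, (k <= size s) && (P k <= tau) by exists 0; rewrite /P take0 big_nil.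
have ub : forall k, (k <= size s) && (P k <= tau) -> k <= size s by move=> k /andP[].
case: (ex_maxnP ex ub) => k /andP[ks Pk] kmax.
have key : forall v, 0 < w v -> latency ends len r s v <= tau -> v != r ->
    0 < k /\ v \in vset ends [set e in take k s].
  move=> v wv lv vr.
  have := hfeas v wv; rewrite (negbTE vr) /= => hh.
  have [e0 _ _] := hasP hh.
  set f := find (incident ends v) s.
  have fs : f < size s by rewrite /f -has_find.
  have lat : latency ends len r s v = P f.+1 by rewrite /latency (negbTE vr).
  have fk : f.+1 <= k by apply: kmax; rewrite fs -lat lv.
  split; first by apply: leq_ltn_trans fk.
  rewrite inE; apply/existsP; exists (nth e0 s f).
  rewrite inE -(nth_take e0 fk) mem_nth ?size_take /=; last first.
    by case: ifP.
  by rewrite (nth_take e0 fk); exact: (nth_find e0 hh).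
case: (posnP k) => [k0|kpos].
  exists [set r], set0; split.
  - exact: tree_single.
  - by rewrite inE.
  - by rewrite /lenset big_set0.
  rewrite /wset; apply: sum_le_sub => v lv wv.
  case: (eqVneq v r) => [->|vr]; first by rewrite inE.
  by have [] := key v wv lv vr; rewrite k0.
have rin : r \in vset ends [set e in take k s].
  case Es: s hhead ks => [|e1 s'] hh2 ks2; first by move: kpos ks2 => /leq_trans h /h.
  rewrite inE; apply/existsP; exists e1; rewrite inE hh2 andbT.
  by rewrite -(prednK kpos) /= mem_head.
exists (vset ends [set e in take k s]), [set e in take k s]; split => //.
- by have := htree k; rewrite kpos ks => /(_ isT).
- by rewrite /lenset; exact: leq_trans (@sum_set_seq E len (take k s)) Pk.
rewrite /wset; apply: sum_le_sub => v lv wv.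
case: (eqVneq v r) => [->|vr] //.
by have [] := key v wv lv vr.
Qed.

Lemma tele (t : nat -> nat) L n : t 0 = 0 -> (forall j, t j <= t j.+1) ->
  \sum_(j < n) (if t j.+1 <= L then t j.+1 - t j else 0) <= minn L (t n).
Proof.
move=> t0 tm; elim: n => [|n IH]; first by rewrite big_ord0.
rewrite big_ord_recr /=.
apply: leq_trans (leq_add IH (leqnn _)) _.
have := tm n; case: ifP => h1 h2; lia.
Qed.

Local Open Scope ring_scope.
Lemma path_cost_rcons (R : realType) (c : nat -> nat -> R) i q n :
  path_cost +%R 0 c i (rcons q n) = path_cost +%R 0 c i q + c (last i q) n.
Proof.
elim: q i => [|j q IH] i /=; first by rewrite addr0 add0r.
by rewrite IH addrA.
Qed.

Lemma Rf_succ (R : realType) (rho Wr : R) n : rho != 0 ->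
  Wr * rho ^- n.+1 * rho = Wr * rho ^- n.
Proof.
move=> r0; by rewrite exprSr invfM mulrA -mulrA mulVf // mulr1.
Qed.

Lemma path_bound (R : realType) (rho Wr : R) (K N : nat) (t : nat -> R)
  (c : nat -> nat -> R) (D : nat -> nat) :
  1 < rho -> (0 < K)%N -> 0 <= Wr -> t 0%N = 0 -> (forall n, 0 <= t n) ->
  (forall i j, (0 < j <= N)%N -> c i j <= Wr * rho ^- i * t j) ->
  (forall n, (0 < D n <= K)%N) ->
  (forall n, D n.+1 = if (D n < K)%N then (D n).+1 else 1%N) ->
  forall n, (0 < n <= N)%N -> exists q, [/\ path ltn 0%N (rcons q n),
     Wr * rho ^- (last 0%N q) <= Wr * rho ^- n * rho ^+ D n &
     path_cost +%R 0 c 0%N q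
       + t n * (rho ^+ K / (rho ^+ K - 1) * (Wr * rho ^- n) * rho ^+ D n)
     <= \sum_(j < n) (t j.+1 - t j) *
          (rho ^+ K / (rho ^+ K - 1) * (Wr * rho ^- j.+1) * rho ^+ D j.+1)].
Proof.
move=> r1 K0 W0 t0 tge0 cle Dr DS.
have r0 : rho != 0 by rewrite gt_eqF // (lt_trans _ r1).
set gam := rho ^+ K.
have gam1 : 1 < gam by rewrite /gam exprn_egt1 // -lt0n.
set g := gam / (gam - 1).
have gg : g * gam = g + gam.
  rewrite /g; field; rewrite subr_eq0 gt_eqF //.
have g1 : 1 <= g.
  by rewrite /g ler_pdivlMr ?subr_gt0 // mul1r; lra.
set Rf := fun i => Wr * rho ^- i.
have Rf0 i : 0 <= Rf i by rewrite /Rf mulr_ge0 // invr_ge0 exprn_ge0 // ltW // (lt_trans _ r1).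
elim => [|n IH]; first by [].
move=> /andP[_ nN].
case: n IH nN => [|n] IH nN.
  exists [::]; split => //=.
    have := Dr 1%N; case: (D 1%N) => [//|d] _.
    rewrite [rho ^+ d.+1]exprS mulrA Rf_succ // expr0 invr1 mulr1.
    by rewrite ler_peMr // exprn_ege1 // ltW.
  by rewrite big_ord1 t0 subr0 add0r.
have [|q [pq hu hc]] := IH; first by rewrite /= ltnW.
have Rfs : Wr * rho ^- n.+2 * rho = Wr * rho ^- n.+1 by rewrite Rf_succ.
rewrite big_ord_recr /=.
rewrite DS.
case: ltnP => hD.
  exists q; split.
  - by move: pq; rewrite !rcons_path => /andP[-> /= /ltnW]; rewrite ltnS.
  - by rewrite [rho ^+ (D _).+1]exprS mulrA Rfs.
  - have eY : g * (Wr * rho ^- n.+2) * rho ^+ (D n.+1).+1 = g * (Wr * rho ^- n.+1) * rho ^+ D n.+1.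
      by rewrite -Rfs [rho ^+ (D _).+1]exprS; move: (rho ^- n.+2) => X; ring.
    rewrite eY.
    set Y := g * (Wr * rho ^- n.+1) * rho ^+ D n.+1 in hc *.
    rewrite mulrBl; lra.
have DK : D n.+1 = K by have := Dr n.+1; case/andP => _ h; apply/eqP; rewrite eqn_leq h hD.
exists (rcons q n.+1); split.
- by rewrite rcons_path pq /= last_rcons.
- by rewrite last_rcons expr1 Rfs.
have eZ : g * (Wr * rho ^- n.+2) * rho = g * (Wr * rho ^- n.+1).
  by rewrite -Rfs; move: (rho ^- n.+2) => X; ring.
rewrite path_cost_rcons expr1 eZ.
move: hc; rewrite DK -/gam => hc.
have hcu : c (last 0%N q) n.+1 <= Wr * rho ^- (last 0%N q) * t n.+1 by apply: cle; rewrite /= ltnW.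
have hu2 : Wr * rho ^- (last 0%N q) * t n.+1 <= Wr * rho ^- n.+1 * gam * t n.+1.
  by rewrite ler_wpM2r //; move: hu; rewrite DK.
set A := Wr * rho ^- n.+1 * t n.+1.
have e1 : t n.+1 * (g * (Wr * rho ^- n.+1) * gam) = (g * gam) * A by rewrite /A; ring.
have e2 : Wr * rho ^- n.+1 * gam * t n.+1 = gam * A by rewrite /A; ring.
rewrite e1 gg in hc.
rewrite e2 in hu2.
have e3 : t n.+2 * (g * (Wr * rho ^- n.+1)) = g * (t n.+2 * (Wr * rho ^- n.+1)) by ring.
have e4 : (t n.+2 - t n.+1) * (g * (Wr * rho ^- n.+1)) = g * (t n.+2 * (Wr * rho ^- n.+1)) - g * A by rewrite /A; ring.
rewrite e3 e4; lra.
Qed.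
Lemma choose_K (R : realType) (eps : R) : 0 < eps ->
  exists K : nat, (0 < K)%N /\ (1 + eps) ^+ K <= expR 1 * eps * K%:R.
Proof.
move=> e0.
set x := ln (1 + eps).
have x0 : 0 < x by apply: ln_gt0; lra.
have ex : expR x = 1 + eps by rewrite /x lnK // posrE; lra.
have xle : x <= eps by have := expR_ge1Dx x; lra.
have xi0 : 0 <= x^-1 by rewrite invr_ge0 ltW.
have /andP[h1 h2] := truncn_itv xi0.
set n := Num.truncn x^-1 in h1 h2.
exists n.+1; split => //.
have hK : (n.+1%:R : R) = n%:R + 1 by rewrite -natr1.
rewrite -ex -expRM_natl.
set y := n.+1%:R * x.
have xn0 : x != 0 by rewrite lt0r_neq0.
have nx1 : n%:R * x <= 1.
  have : n%:R * x <= x^-1 * x by rewrite ler_pM2r.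
  by rewrite mulVf.
have y1 : 1 < y.
  have : x^-1 * x < n.+1%:R * x by rewrite ltr_pM2r.
  by rewrite mulVf.
have yx : y <= 1 + x.
  rewrite /y hK mulrDl mul1r; lra.
set s := y - 1.
have -> : y = 1 + s by rewrite /s; lra.
rewrite expRD.
have hs : expR s * expR (x - s) = 1 + eps by rewrite -expRD -ex; congr expR; lra.
have hxs := expR_ge1Dx (x - s).
have es0 := expR_gt0 s.
rewrite -mulrA ler_pM2l ?expR_gt0 //.
have Ky : n.+1%:R = (1 + s) / x.
  by rewrite -[1 + s]/(1 + (y - 1)) addrC subrK /y mulfK // lt0r_neq0.
rewrite Ky.
have hA : expR s * (1 + (x - s)) <= 1 + eps.
  by rewrite -hs ler_pM2l.
have hpos : 0 < 1 + (x - s) by rewrite /s; lra.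
have hB : expR s <= (1 + eps) / (1 + (x - s)).
  by rewrite ler_pdivlMr.
apply: (le_trans hB).
rewrite ler_pdivrMr // [eps * _]mulrA mulrAC ler_pdivlMr //.
have s0 : 0 <= s by rewrite /s; lra.
have sx : s <= x by rewrite /s; lra.
have h3 : 0 <= eps * (s * (x - s)) by apply: mulr_ge0; [lra| apply: mulr_ge0; lra].
have -> : eps * (1 + s) * (1 + (x - s)) = eps * (1 + x) + eps * (s * (x - s)) by ring.
nra.
Qed.
Lemma rot1 (R : realType) (h : nat -> R) K : (0 < K)%N ->
  \sum_(b < K) h (b.+1 %% K)%N = \sum_(b < K) h b.
Proof.
case: K => [//|K] _.
rewrite big_ord_recr big_ord_recl /= modnn addrC; congr (_ + _).
apply: eq_bigr => i _; rewrite modn_small //.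
by rewrite ltnS.
Qed.

Lemma rotm (R : realType) (h : nat -> R) K m : (0 < K)%N ->
  \sum_(b < K) h ((b + m) %% K)%N = \sum_(b < K) h b.
Proof.
move=> K0; elim: m => [|m IH].
  by apply: eq_bigr => i _; rewrite addn0 modn_small.
rewrite -IH -(@rot1 R (fun x => h ((x + m) %% K)%N) K K0).
apply: eq_bigr => i _; congr h.
by rewrite modnDml addSn addnS.
Qed.

Lemma average (R : realType) K (f : 'I_K -> R) : (0 < K)%N ->
  exists b, K%:R * f b <= \sum_b f b.
Proof.
move=> K0.
case: (pickP (fun b => K%:R * f b <= \sum_b f b)) => [b hb|hn]; first by exists b.
have : \sum_(b < K) \sum_b f b < \sum_(b < K) K%:R * f b.
  apply: ltr_sum; first by apply/hasP; exists (Ordinal K0); rewrite ?mem_index_enum.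
  by move=> b _; rewrite ltNge hn.
by rewrite sumr_const card_ord -mulr_sumr mulr_natl ltxx.
Qed.

Lemma geom (R : realType) (rho : R) K :
  (\sum_(b < K) rho ^+ b.+1) * (rho - 1) = rho ^+ K.+1 - rho.
Proof.
elim: K => [|K IH]; first by rewrite big_ord0 mul0r expr1 subrr.
rewrite big_ord_recr /= mulrDl IH [rho ^+ K.+2]exprS [rho ^+ K.+1]exprS; ring.
Qed.

Lemma path_exists (R : realType) (eps Wr : R) (N : nat) (t : nat -> R)
  (c : nat -> nat -> R) :
  0 < eps -> 0 <= Wr -> t 0%N = 0 -> (forall n, t n <= t n.+1) ->
  (forall i j, (0 < j <= N)%N -> c i j <= Wr * (1 + eps) ^- i * t j) ->
  (0 < N)%N ->
  exists p, [/\ path ltn 0%N p, last 0%N p = N &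
    path_cost +%R 0 c 0%N p <= (1 + eps) * expR 1 *
      \sum_(j < N) (t j.+1 - t j) * (Wr * (1 + eps) ^- j.+1)].
Proof.
move=> e0 W0 t0 tmono cle N0.
have tge0 n : 0 <= t n.
  elim: n => [|n IH]; first by rewrite t0.
  exact: le_trans IH (tmono n).
set rho := 1 + eps.
have r1 : 1 < rho by rewrite /rho; lra.
have r0 : rho != 0 by rewrite gt_eqF // (lt_trans _ r1).
have [K [K0 hK]] := @choose_K R eps e0.
set gam := rho ^+ K.
have gam1 : 1 < gam by rewrite /gam exprn_egt1 // -lt0n.
set g := gam / (gam - 1).
set Rf := fun j => Wr * rho ^- j.
set X := \sum_(j < N) (t j.+1 - t j) * Rf j.+1.
have X0 : 0 <= X.
  apply: sumr_ge0 => j _; apply: mulr_ge0; first by rewrite subr_ge0.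
  by rewrite /Rf mulr_ge0 // invr_ge0 exprn_ge0 // ltW // (lt_trans _ r1).
set D := fun (b : 'I_K) n => ((b + n) %% K).+1.
set S := fun (b : 'I_K) => \sum_(j < N) (t j.+1 - t j) * (g * Rf j.+1 * rho ^+ D b j.+1).
set Z := \sum_(b < K) rho ^+ b.+1.
have sumS : \sum_b S b = g * Z * X.
  rewrite /S exchange_big /X mulr_sumr; apply: eq_bigr => j _.
  rewrite -mulr_sumr -mulr_sumr.
  have -> : \sum_(i < K) rho ^+ D i j.+1 = Z.
    rewrite /Z -(@rotm R (fun x => rho ^+ x.+1) K j.+1 K0).
    by apply: eq_bigr.
  move: (t j.+1 - t j) (Rf j.+1) => u v; ring.
have gZ : g * Z <= expR 1 * rho * K%:R.
  have hZ : Z = (rho ^+ K.+1 - rho) / eps.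
    have re : rho - 1 = eps by rewrite /rho; ring.
    by rewrite -geom re mulfK // gt_eqF.
  have -> : g * Z = gam * rho / eps.
    rewrite hZ /g /gam exprSr; field.
    by rewrite gt_eqF //= subr_eq0 gt_eqF.
  rewrite ler_pdivrMr // -/gam.
  have : gam * rho <= expR 1 * eps * K%:R * rho.
    by rewrite ler_pM2r // (lt_trans _ r1).
  suff -> : expR 1 * rho * K%:R * eps = expR 1 * eps * K%:R * rho by [].
  ring.
have [b hb] := @average R K S K0.
have hSb : S b <= expR 1 * rho * X.
  rewrite sumS in hb.
  have : K%:R * S b <= K%:R * (expR 1 * rho * X).
    apply: (le_trans hb).
    rewrite mulrA [K%:R * _]mulrC; exact: ler_wpM2r.
  by rewrite ler_pM2l // ltr0n.
have Dr n : (0 < D b n <= K)%N by rewrite /D ltnS ltn_pmod.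
have DS n : D b n.+1 = if (D b n < K)%N then (D b n).+1 else 1%N.
  rewrite /D addnS; move: (b + n)%N => m.
  rewrite -[m.+1]addn1 -modnDml addn1.
  have := ltn_pmod m K0.
  move=> h; case: ifP => hd.
    by rewrite modn_small.
  have -> : (m %% K).+1 = K by apply/eqP; rewrite eqn_leq h leqNgt hd.
  by rewrite modnn.
have [|q [pq hu hc]] := @path_bound R rho Wr K N t c (D b) r1 K0 W0 t0 tge0 cle Dr DS N.
  by rewrite N0 leqnn.
exists (rcons q N); split.
- exact: pq.
- by rewrite last_rcons.
rewrite path_cost_rcons.
have hcu : c (last 0%N q) N <= Wr * rho ^- (last 0%N q) * t N by apply: cle; rewrite N0 leqnn.
have h2 : Wr * rho ^- (last 0%N q) * t N <= t N * (g * (Wr * rho ^- N) * rho ^+ D b N).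
  rewrite mulrC ler_wpM2l //; apply: (le_trans hu).
  rewrite -[in X in _ <= X]mulrA -[X in X <= _]mul1r ler_wpM2r //.
    by rewrite mulr_ge0 // ?exprn_ge0 ?mulr_ge0 // ?invr_ge0 ?exprn_ge0 // ltW // (lt_trans _ r1).
  by rewrite /g ler_pdivlMr ?subr_gt0 // mul1r; lra.
apply: le_trans (le_trans _ hSb) _; last by rewrite [rho * _]mulrC.
apply: (le_trans _ hc).
by rewrite lerD2l; apply: le_trans hcu h2.
Qed.

Theorem lemma7 (R : realType) (V E : finType) (ends : E -> V * V)
    (len : E -> nat) (w : V -> nat) (r : V)
    (Gconn : graph_connected ends)
    (eps : R) (eps_gt0 : 0 < eps)
    (U : nat -> {set V}) (F : nat -> {set E}) :
  let W : nat := (\sum_(v : V) w v)%N in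
  let omega : nat := `| Num.ceil (ln (W%:R : R) / ln (1 + eps)) |%N in
  let q (i : nat) : R := W%:R - W%:R * (1 + eps) ^- i in
  U 0%N = [set r] -> F 0%N = set0 ->
  (forall i, (i <= omega)%N ->
     [/\ is_tree ends (U i) (F i), r \in U i,
         q i <= (wset w (U i))%:R &
         forall (U' : {set V}) (F' : {set E}),
           is_tree ends U' F' -> r \in U' -> q i <= (wset w U')%:R ->
           (lenset len (F i))%:R <= (5 / 2 : R) * (lenset len F')%:R]) ->
  let c (i j : nat) : R := W%:R * (1 + eps) ^- i * (lenset len (F j))%:R in
  forall (Lstar : nat),
    (exists s : seq E, [/\ expanding_pattern ends r s, feasible ends w r s &
                          total_latency ends len w r s = Lstar]) ->
    (forall s : seq E, expanding_pattern ends r s -> feasible ends w r s ->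
       (Lstar <= total_latency ends len w r s)%N) ->
    exists p : seq nat,
      [/\ path ltn 0%N p, last 0%N p = omega &
          path_cost +%R 0 c 0%N p <= (5 / 2 : R) * (1 + eps) * expR 1 * Lstar%:R].
Proof.
move=> W omega q HU0 HF0 Htr c Lstar [s [hexp hfeas hL]] Hopt.
have e52 : (0 : R) <= 5 / 2 by lra.
have RHS0 : 0 <= (5 / 2 : R) * (1 + eps) * expR 1 * Lstar%:R.
  by rewrite !mulr_ge0 // ?expR_ge0 //; lra.
case: (posnP omega) => [om0|ompos].
  by exists [::]; split => //=; rewrite om0.
set rho := 1 + eps.
have r1 : 1 < rho by rewrite /rho; lra.
have r0 : rho != 0 by rewrite gt_eqF // (lt_trans _ r1).
have Rf0 j : 0 <= W%:R * rho ^- j.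
  by rewrite mulr_ge0 // invr_ge0 exprn_ge0 // ltW // (lt_trans _ r1).
set lat := latency ends len r s.
set G := fun tau => (\sum_(v | lat v <= tau) w v)%N.
set M := (\sum_(e <- s) len e)%N.
have latM v : (lat v <= M)%N.
  rewrite /lat /latency; case: ifP => // _.
  by rewrite /M -[in X in (_ <= X)%N](cat_take_drop (find (incident ends v) s).+1 s) big_cat leq_addr.
have GM : G M = W by rewrite /G; apply: eq_bigl => v; exact: latM.
have qleW j : q j <= W%:R by rewrite /q lerBlDr lerDl.
have ex_t j : exists tau, q j <= (G tau)%:R by exists M; rewrite GM qleW.
pose t j := ex_minn (ex_t j).
have tP j : q j <= (G (t j))%:R /\ forall m, q j <= (G m)%:R -> (t j <= m)%N.
  by rewrite /t; case: ex_minnP.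
have t0 : t 0%N = 0%N.
  apply/eqP; rewrite -leqn0; apply: (tP 0%N).2.
  by rewrite /q expr0 invr1 mulr1 subrr.
have qmono j : q j <= q j.+1.
  have h : W%:R * rho ^- j.+1 <= W%:R * rho ^- j.+1 * rho by rewrite ler_peMr // ltW.
  rewrite Rf_succ // in h; rewrite /q -/rho; lra.
have tmono j : (t j <= t j.+1)%N.
  exact: (tP j).2 _ (le_trans (qmono j) (tP j.+1).1).
have treeb j : (0 < j <= omega)%N -> (lenset len (F j))%:R <= (5 / 2 : R) * (t j)%:R.
  case/andP => _ jle.
  have [_ _ _ hmin] := Htr j jle.
  have [U' [F' [ht hr hl hw]]] := @prefix_tree V E ends len w r s (t j) hexp hfeas.
  apply: le_trans (hmin U' F' ht hr _) _.
    by apply: le_trans (tP j).1 _; rewrite ler_nat.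
  by rewrite ler_wpM2l // ler_nat.
have lower : \sum_(j < omega) ((t j.+1)%:R - (t j)%:R) * (W%:R * rho ^- j.+1) <= Lstar%:R.
  pose A j := ((\sum_(v | (t j.+1 <= lat v)%N) w v) * (t j.+1 - t j))%N.
  have step j : ((t j.+1)%:R - (t j)%:R) * (W%:R * rho ^- j.+1) <= (A j)%:R.
    rewrite /A natrM natrB ?tmono //.
    case: (ltnP (t j) (t j.+1)) => htj; last first.
      have -> : t j.+1 = t j by apply/eqP; rewrite eqn_leq htj tmono.
      by rewrite subrr !mul0r mulr0.
    rewrite mulrC ler_wpM2r ?subr_ge0 ?ler_nat ?tmono //.
    set tau := (t j.+1).-1.
    have tS : t j.+1 = tau.+1 by rewrite /tau prednK // (leq_ltn_trans _ htj).
    have nq : ~~ (q j.+1 <= (G tau)%:R).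
      by apply/negP => hq; have := (tP j.+1).2 _ hq; rewrite tS ltnn.
    rewrite -ltNge in nq.
    have hW : (W%:R : R) = (G tau)%:R + (\sum_(v | (t j.+1 <= lat v)%N) w v)%:R.
      rewrite -natrD; congr (_%:R).
      rewrite /W (bigID (fun v => (lat v <= tau)%N)) /=; congr (_ + _)%N.
      by apply: eq_bigl => v; rewrite tS ltnNge.
    move: nq; rewrite /q -/rho; lra.
  apply: le_trans (ler_sum _ (fun (j : 'I_omega) _ => step j)) _.
  rewrite -natr_sum ler_nat -hL /total_latency.
  have -> : (\sum_(v | 0 < w v) w v * latency ends len r s v = \sum_v w v * lat v)%N.
    rewrite big_mkcond; apply: eq_bigr => v _; case: (posnP (w v)) => [->|h] //; by rewrite h.
  rewrite /A.
  under eq_bigr => j _ do rewrite big_distrl /= big_mkcond /=.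
  rewrite exchange_big /=; apply: leq_sum => v _.
  have -> : (\sum_(j < omega) (if (t j.+1 <= lat v)%N then w v * (t j.+1 - t j) else 0)
     = w v * \sum_(j < omega) (if (t j.+1 <= lat v)%N then t j.+1 - t j else 0))%N.
    rewrite big_distrr; apply: eq_bigr => j _ /=; case: ifP => _ //; by rewrite muln0.
  by rewrite leq_mul2l (leq_trans (tele _ _ _ t0 tmono)) ?geq_minl ?orbT.
pose t' j := (5 / 2 : R) * (t j)%:R.
have [|||p [pp pl pc]] := @path_exists R eps W%:R omega t' c eps_gt0 (ler0n _ _) _ _ _ ompos.
- by rewrite /t' t0 mulr0.
- by move=> n; rewrite /t' ler_wpM2l // ler_nat.
- move=> i j hj; rewrite /c /t' ler_wpM2l //; exact: treeb.
exists p; split => //.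
apply: (le_trans pc).
have -> : \sum_(j < omega) (t' j.+1 - t' j) * (W%:R * (1 + eps) ^- j.+1)
   = (5 / 2 : R) * \sum_(j < omega) ((t j.+1)%:R - (t j)%:R) * (W%:R * rho ^- j.+1).
  rewrite mulr_sumr; apply: eq_bigr => j _; by rewrite /t' -mulrBr -mulrA.
rewrite -/rho.
have : (5 / 2 : R) * \sum_(j < omega) ((t j.+1)%:R - (t j)%:R) * (W%:R * rho ^- j.+1) <= (5/2 : R) * Lstar%:R.
  by rewrite ler_wpM2l.
have : 0 <= rho * expR 1 by rewrite mulr_ge0 ?expR_ge0 //; lra.
set Y := (5 / 2 : R) * \sum_(j < omega) _.
move=> h1 h2.
have -> : (5 / 2 : R) * rho * expR 1 * Lstar%:R = rho * expR 1 * ((5 / 2) * Lstar%:R) by ring.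
by rewrite ler_wpM2l.
Qed.
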